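(* Let $f\colon\mathbb{R}^n\to\mathbb{R}$ be convex and differentiable with $\|\nabla f(x)-\nabla f(y)\|\le L\|x-y\|$ for all $x,y\in\mathbb{R}^n$ (Euclidean norm, $L>0$), and assume $f$ has a minimizer $x_\star$; write $f_\star=f(x_\star)$. Let $\{\theta_k\}_{k=0}^\infty$ be a positive sequence with $\theta_0=1$ and $0\le\theta_{k+1}^2-\theta_{k+1}\le\theta_k^2$ for $k=0,1,\dots$. Given $x_0\in\mathbb{R}^n$, let $y_0=x_0$ and for $k=0,1,\dots$ \[ y_{k+1}=x_k-\tfrac1L\nabla f(x_k),\qquad x_{k+1}=y_{k+1}+\frac{\theta_k-1}{\theta_{k+1}}(y_{k+1}-y_k)+\frac{\theta_k}{\theta_{k+1}}(y_{k+1}-x_k). \] Then for $k=1,2,\dots$, \[ f(y_k)-f_\star\le\frac{L\|x_0-x_\star\|^2}{4\theta_{k-1}^2}. \]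
   Context: This iteration is the optimized gradient method (OGM). $\|\cdot\|$ denotes the Euclidean norm. *)

(* Defs.v *)
(* R^n is represented by row vectors 'rV[R]_n. *)
From HB Require Import structures.
From mathcomp Require Import all_boot all_order all_algebra.
From mathcomp Require Import all_classical all_reals all_analysis.
Set Implicit Arguments. Unset Strict Implicit. Unset Printing Implicit Defensive.
Import Order.TTheory GRing.Theory Num.Theory.
Import numFieldNormedType.Exports.
Local Open Scope ring_scope.

Definition dotv (R : realType) (n : nat) (u v : 'rV[R]_n) : R :=
  \sum_(i < n) u 0 i * v 0 i.

(* Euclidean norm (the library's norm on matrices is the max-norm) *)
Definition enorm (R : realType) (n : nat) (u : 'rV[R]_n) : R :=
  Num.sqrt (dotv u u).

Definition convex_fun (R : realType) (n : nat) (f : 'rV[R]_n -> R) : Prop :=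
  forall (x y : 'rV[R]_n) (t : R), 0 <= t -> t <= 1 ->
    f (t *: x + (1 - t) *: y) <= t * f x + (1 - t) * f y.

Definition is_gradient (R : realType) (n : nat) (f : 'rV[R]_n -> R)
    (g : 'rV[R]_n -> 'rV[R]_n) : Prop :=
  forall x : 'rV[R]_n, differentiable f x /\ forall v, 'd f x v = dotv (g x) v.

(* Main.v *)
Require Import Defs.
From HB Require Import structures.
From mathcomp Require Import all_boot all_order all_algebra.
From mathcomp Require Import all_classical all_reals all_analysis.
From mathcomp Require Import ring lra.
Import Order.TTheory GRing.Theory Num.Theory.
Import numFieldNormedType.Exports.
Local Open Scope ring_scope.


Lemma dotvC {R : realType} {n : nat} (u v : 'rV[R]_n) : dotv u v = dotv v u.
Proof. by rewrite /dotv; apply: eq_bigr => i _; rewrite mulrC. Qed.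
Lemma dotvDl {R : realType} {n : nat} (u w v : 'rV[R]_n) : dotv (u + w) v = dotv u v + dotv w v.
Proof. by rewrite /dotv -big_split; apply: eq_bigr => i _; rewrite mxE mulrDl. Qed.
Lemma dotvNl {R : realType} {n : nat} (u v : 'rV[R]_n) : dotv (- u) v = - dotv u v.
Proof. by rewrite /dotv -sumrN; apply: eq_bigr => i _; rewrite mxE mulNr. Qed.
Lemma dotvZl {R : realType} {n : nat} (c : R) (u v : 'rV[R]_n) : dotv (c *: u) v = c * dotv u v.
Proof. by rewrite /dotv mulr_sumr; apply: eq_bigr => i _; rewrite mxE mulrA. Qed.
Lemma dotvDr {R : realType} {n : nat} (u w v : 'rV[R]_n) : dotv v (u + w) = dotv v u + dotv v w.
Proof. by rewrite dotvC dotvDl !(dotvC v). Qed.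
Lemma dotvNr {R : realType} {n : nat} (u v : 'rV[R]_n) : dotv v (- u) = - dotv v u.
Proof. by rewrite dotvC dotvNl (dotvC v). Qed.
Lemma dotvZr {R : realType} {n : nat} (c : R) (u v : 'rV[R]_n) : dotv v (c *: u) = c * dotv v u.
Proof. by rewrite dotvC dotvZl (dotvC v). Qed.
Lemma dotv_ge0 {R : realType} {n : nat} (u : 'rV[R]_n) : 0 <= dotv u u.
Proof. by apply: sumr_ge0 => i _; rewrite -expr2 sqr_ge0. Qed.
Lemma dotv_eq0 {R : realType} {n : nat} (u : 'rV[R]_n) : dotv u u = 0 -> u = 0.
Proof.
move=> /eqP; rewrite /dotv psumr_eq0 => [/allP H|i _]; last by rewrite -expr2 sqr_ge0.
apply/rowP => i; rewrite !mxE; have /implyP := H i (mem_index_enum _).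
by move=> /(_ isT); rewrite mulf_eq0 orbb => /eqP.
Qed.
Lemma enorm_sq {R : realType} {n : nat} (u : 'rV[R]_n) : enorm u ^+ 2 = dotv u u.
Proof. by rewrite /enorm sqr_sqrtr // dotv_ge0. Qed.

Ltac dexp := rewrite ?(dotvDl, dotvDr, dotvNl, dotvNr, dotvZl, dotvZr).

Lemma archi_le (R : realType) (X c : R) : 0 <= c ->
  (forall m : nat, X <= c + c / m.+1%:R) -> X <= c.
Proof.
move=> c0 H; apply/ler_addgt0Pr => e e0.
have ce0 : 0 <= c / e by rewrite divr_ge0 // ltW.
have hb := archi_boundP ce0.
apply: (le_trans (H (Num.bound (c / e)))); rewrite lerD2l.
rewrite ler_pdivrMr ?ltr0Sn //.
rewrite ltr_pdivrMr // in hb.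
apply: (le_trans (ltW hb)); rewrite mulrC ler_pM2l // ler_nat.
by [].
Qed.

Lemma lip_aux {R : realType} {n : nat} (L : R) (e d : 'rV[R]_n) :
  0 < L -> enorm e <= L * enorm d -> dotv e d <= L * dotv d d.
Proof.
move=> L0 h1.
have E := enorm_sq e; have D := enorm_sq d.
have en0 : 0 <= enorm e by apply: sqrtr_ge0.
have dn0 : 0 <= enorm d by apply: sqrtr_ge0.
have hEE : dotv e e <= L ^+ 2 * dotv d d by rewrite -E -D; nra.
have h0 := dotv_ge0 (e - L *: d); move: h0; dexp; rewrite (dotvC d e) => h0.
nra.
Qed.

Lemma lip_dot {R : realType} {n : nat} {g : 'rV[R]_n -> 'rV[R]_n} {L : R} :
  0 < L -> (forall u v : 'rV[R]_n, enorm (g u - g v) <= L * enorm (u - v)) ->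
  forall u w, dotv (g w - g u) (w - u) <= L * dotv (w - u) (w - u).
Proof. by move=> L0 lip u w; apply: lip_aux. Qed.

Lemma lip_dir {R : realType} {n : nat} {g : 'rV[R]_n -> 'rV[R]_n} {L : R} :
  0 < L -> (forall u v : 'rV[R]_n, enorm (g u - g v) <= L * enorm (u - v)) ->
  forall u v c, 0 < c -> dotv (g (u + c *: v)) v <= dotv (g u) v + L * c * dotv v v.
Proof.
move=> L0 lip u v c c0; have := lip_dot L0 lip u (u + c *: v).
rewrite addrAC subrr add0r; dexp => h.
have : c * (dotv (g (u + c *: v)) v - dotv (g u) v) <= c * (L * c * dotv v v) by lra.
by rewrite ler_pM2l // => ?; lra.
Qed.

Local Open Scope classical_set_scope.
Lemma grad_ineq {R : realType} {n : nat} {f : 'rV[R]_n -> R} {g : 'rV[R]_n -> 'rV[R]_n} :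
  convex_fun f -> is_gradient f g ->
  forall a b, f a + dotv (g a) (b - a) <= f b.
Proof.
move=> cf gf a b; set v := b - a.
have [da dv] := gf a.
have cq : derivable f a v by apply: diff_derivable.
set q := (fun h : R => h^-1 *: ((f \o shift a) (h *: v) - f a)) in cq.
have hr : q @ 0^'+ --> lim (q @ 0^').
  move=> A /cq /nbhs_ballP [_ /posnumP[e] xe_A].
  by exists e%:num => //= y xe_y /gt_eqF/negbT/xe_A; exact.
have : lim (q @ 0^') <= f b - f a.
  apply: (cvgr_to_le hr).
  near=> t.
  have t0 : 0 < t by near: t; exact: nbhs_right_gt.
  have t1 : t < 1 by near: t; exact: nbhs_right_lt.
  rewrite /q /= ler_pdivrMl // addrC.
  have := cf b a t (ltW t0) (ltW t1).
  have -> : t *: b + (1 - t) *: a = t *: v + a.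
    by apply/rowP => i; rewrite /v !mxE; ring.
  move=> h; lra.
rewrite -/(derive f a v) deriveE // dv; lra.
Unshelve. all: by end_near. Qed.
Local Close Scope classical_set_scope.

Lemma descent {R : realType} {n : nat} {f : 'rV[R]_n -> R} {g : 'rV[R]_n -> 'rV[R]_n} {L : R} :
  convex_fun f -> is_gradient f g -> 0 < L ->
  (forall u v : 'rV[R]_n, enorm (g u - g v) <= L * enorm (u - v)) ->
  forall a b, f b <= f a + dotv (g a) (b - a) + L / 2 * dotv (b - a) (b - a).
Proof.
move=> cf gf L0 lip a b.
set v := b - a.
have dd0 : 0 <= dotv v v by apply: dotv_ge0.
suff : f b - f a - dotv (g a) v <= L / 2 * dotv v v by lra.
apply: archi_le; first by rewrite mulr_ge0 // divr_ge0 // ltW.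
move=> m; set M : R := m.+1%:R.
have M0 : 0 < M by rewrite ltr0Sn.
pose p (j : nat) := a + (j%:R / M) *: v.
have claim : forall j : nat, f (p j) - f a <= j%:R / M * dotv (g a) v
   + L * dotv v v * (j%:R * (j%:R + 1) / 2) / M ^+ 2.
  elim=> [|j IH].
    rewrite /p mul0r scale0r addr0 !mul0r mulr0 mul0r; lra.
  have C := grad_ineq cf gf (p j.+1) (p j).
  have e0 : p j - p j.+1 = - (M^-1 *: v).
    by apply/rowP => i; rewrite /p !mxE -natr1; field; apply: lt0r_neq0.
  rewrite e0 dotvNr dotvZr in C.
  have Hd := lip_dir L0 lip a v (j.+1%:R / M) (divr_gt0 (ltr0Sn _ _) M0).
  have Mi0 : 0 <= M^-1 by rewrite invr_ge0 ltW.
  have Hd' := ler_wpM2l Mi0 Hd.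
  rewrite -[p j.+1]/(a + (j.+1%:R / M) *: v) in C.
  rewrite -[p j.+1]/(a + (j.+1%:R / M) *: v).
  have e1 : j.+1%:R / M * dotv (g a) v = j%:R / M * dotv (g a) v + M^-1 * dotv (g a) v.
    by rewrite -natr1; field; apply: lt0r_neq0.
  have e2 : L * dotv v v * (j.+1%:R * (j.+1%:R + 1) / 2) / M ^+ 2 =
     L * dotv v v * (j%:R * (j%:R + 1) / 2) / M ^+ 2 + M^-1 * (L * (j.+1%:R / M) * dotv v v).
    by rewrite -natr1; field; apply: lt0r_neq0.
  rewrite e1 e2. move: Hd' C IH. set F1 := f (a + _). set D1 := dotv (g (a + _)) v. set F0 := f (p j). move: F1 D1 F0. move=> F1 D1 F0 H1 H2 H3. have := lerD (lerD H1 H2) H3. clear. move=> H. clearbody M. lra.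
have := claim m.+1.
have -> : p m.+1 = b by apply/rowP => i; rewrite /p /v -/M !mxE divff ?mul1r; [ring|apply: lt0r_neq0].
have -> : m.+1%:R / M * dotv (g a) v = dotv (g a) v by rewrite -/M divff ?mul1r //; apply: lt0r_neq0.
have -> : L * dotv v v * (M * (M + 1) / 2) / M ^+ 2 = L / 2 * dotv v v + L / 2 * dotv v v / M.
  by field; apply: lt0r_neq0.
clearbody M; lra.
Qed.

Lemma coco {R : realType} {n : nat} {f : 'rV[R]_n -> R} {g : 'rV[R]_n -> 'rV[R]_n} {L : R} :
  convex_fun f -> is_gradient f g -> 0 < L ->
  (forall u v : 'rV[R]_n, enorm (g u - g v) <= L * enorm (u - v)) ->
  forall a b, f a - f b <= dotv (g a) (a - b) - dotv (g a - g b) (g a - g b) / (2 * L).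
Proof.
move=> cf gf L0 lip a b.
have C := grad_ineq cf gf a (b - L^-1 *: (g b - g a)).
have D := descent cf gf L0 lip b (b - L^-1 *: (g b - g a)).
have e0 : b - L^-1 *: (g b - g a) - b = - (L^-1 *: (g b - g a)).
  by rewrite addrC addKr.
rewrite e0 in D.
move: C D; dexp.
rewrite ?(dotvC b (g a)) ?(dotvC a (g a)) ?(dotvC (g b) (g a)) ?(dotvC a (g b)) ?(dotvC b (g b)).
have L1 : L / 2 * (L^-1 * L^-1) = L^-1 / 2 by field; apply: lt0r_neq0.
have L2 : forall X : R, X / (2 * L) = L^-1 / 2 * X by move=> X; field; apply: lt0r_neq0.
rewrite !L2.
set Li := L^-1.
move=> C D.
have L3 : forall X Y : R, L / 2 * - - (Li * (Li * X - Li * Y)) = Li / 2 * (X - Y).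
  by move=> X Y; rewrite /Li; field; apply: lt0r_neq0.
rewrite L3 in D.
clearbody Li; lra.
Qed.

Lemma desc_step {R : realType} {n : nat} {f : 'rV[R]_n -> R} {g : 'rV[R]_n -> 'rV[R]_n} {L : R} :
  convex_fun f -> is_gradient f g -> 0 < L ->
  (forall u v : 'rV[R]_n, enorm (g u - g v) <= L * enorm (u - v)) ->
  forall a, f (a - L^-1 *: g a) <= f a - dotv (g a) (g a) / L / 2.
Proof.
move=> cf gf L0 lip a.
have D := descent cf gf L0 lip a (a - L^-1 *: g a).
have e0 : a - L^-1 *: g a - a = - (L^-1 *: g a) by rewrite addrAC subrr add0r.
rewrite e0 in D; move: D; dexp.
have -> : L / 2 * - - (L^-1 * (L^-1 * dotv (g a) (g a))) = dotv (g a) (g a) / L / 2.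
  by field; apply: lt0r_neq0.
move=> D.
lra.
Qed.

Lemma expand_sq {R : realType} {n : nat} (d G : 'rV[R]_n) (c : R) :
  dotv (d - c *: G) (d - c *: G) = dotv d d - 2 * c * dotv G d + c ^+ 2 * dotv G G.
Proof. dexp; rewrite (dotvC d G); ring. Qed.

Theorem theorem1 (R : realType) (n : nat) (f : 'rV[R]_n -> R)
  (g : 'rV[R]_n -> 'rV[R]_n) (L : R) (xstar : 'rV[R]_n)
  (theta : nat -> R) (x y : nat -> 'rV[R]_n) :
  convex_fun f ->
  is_gradient f g ->
  0 < L ->
  (forall u v : 'rV[R]_n, enorm (g u - g v) <= L * enorm (u - v)) ->
  (forall u : 'rV[R]_n, f xstar <= f u) ->
  (forall k, 0 < theta k) ->
  theta 0%N = 1 ->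
  (forall k, 0 <= theta k.+1 ^+ 2 - theta k.+1 /\
             theta k.+1 ^+ 2 - theta k.+1 <= theta k ^+ 2) ->
  y 0%N = x 0%N ->
  (forall k, y k.+1 = x k - L^-1 *: g (x k)) ->
  (forall k, x k.+1 = y k.+1 + ((theta k - 1) / theta k.+1) *: (y k.+1 - y k)
                             + (theta k / theta k.+1) *: (y k.+1 - x k)) ->
  forall k : nat, (1 <= k)%N ->
    f (y k) - f xstar <= L * enorm (x 0%N - xstar) ^+ 2 / (4 * theta k.-1 ^+ 2).
Proof.
move=> cf gf L0 lip hmin th0 th00 threc y0 yrec xrec k k1.
have LN0 : L != 0 by apply: lt0r_neq0.
have div2L : forall X : R, X / (2 * L) = X / L / 2.
  by move=> X; field.
have g0 : g xstar = 0.
  apply: dotv_eq0; apply/eqP; rewrite eq_le dotv_ge0 andbT.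
  have := desc_step cf gf L0 lip xstar; have := hmin (xstar - L^-1 *: g xstar).
  have := dotv_ge0 (g xstar).
  have Li0 : 0 < L^-1 by rewrite invr_gt0.
  move: (dotv (g xstar) (g xstar)) => X X0 h1 h2.
  have : X / L / 2 <= 0 by lra.
  have -> : X = (X / L / 2) * (2 * L) by field.
  move=> H; apply: mulr_le0_ge0 => //; lra.
pose h j := f (x j) - f xstar - dotv (g (x j)) (g (x j)) / L / 2.
have F1 : forall j, f (y j.+1) - f xstar <= h j.
  by move=> j; rewrite yrec /h; have := desc_step cf gf L0 lip (x j); lra.
have F2 : forall j, 0 <= h j.
  by move=> j; have := F1 j; have := hmin (y j.+1); lra.
have F3 : forall j, h j <= dotv (g (x j)) (x j - xstar) - dotv (g (x j)) (g (x j)) / L.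
  move=> j; have := coco cf gf L0 lip (x j) xstar.
  by rewrite g0 subr0 div2L /h; lra.
have F4 : forall j, h j.+1 - h j <= dotv (g (x j.+1)) (x j.+1 - y j.+1)
                                  - dotv (g (x j.+1)) (g (x j.+1)) / L.
  move=> j; have := coco cf gf L0 lip (x j.+1) (x j).
  rewrite div2L /h yrec; dexp.
  rewrite (dotvC (g (x j)) (g (x j.+1))).
  lra.
pose z j := theta j *: x j - (theta j - 1) *: y j.
have Z : forall j, z j.+1 = z j - (2 * theta j / L) *: g (x j).
  move=> j; apply/rowP => i; rewrite /z xrec !yrec !mxE.
  have := th0 j.+1; move=> /lt0r_neq0 tn0.
  by field; rewrite LN0 tn0.
pose R2 := dotv (x 0%N - xstar) (x 0%N - xstar).
pose V j := 2 * theta j ^+ 2 * h j + L / 2 * dotv (z j.+1 - xstar) (z j.+1 - xstar).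
have Lexp : forall (A X Y t : R), L / 2 * (A - 2 * (2 * t / L) * X + (2 * t / L) ^+ 2 * Y)
     = L / 2 * A - 2 * t * X + 2 * t ^+ 2 * (Y / L).
  by move=> A X Y t; field.
have claim : forall j, V j <= L / 2 * R2.
  elim=> [|j IH].
    rewrite /V.
    have -> : z 1%N - xstar = (x 0%N - xstar) - (2 * theta 0%N / L) *: g (x 0%N).
      rewrite Z /z th00 y0; apply/rowP => i; rewrite !mxE; ring.
    rewrite expand_sq Lexp th00 -/R2.
    have := F3 0%N; rewrite (dotvC (g (x 0%N))).
    lra.
  rewrite /V in IH *.
  have -> : z j.+2 - xstar = (z j.+1 - xstar) - (2 * theta j.+1 / L) *: g (x j.+1).
    rewrite Z; apply/rowP => i; rewrite !mxE; ring.
  rewrite expand_sq Lexp.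
  have -> : dotv (g (x j.+1)) (z j.+1 - xstar) = theta j.+1 * dotv (g (x j.+1)) (x j.+1)
     - (theta j.+1 - 1) * dotv (g (x j.+1)) (y j.+1) - dotv (g (x j.+1)) xstar.
    by rewrite /z; dexp; ring.
  have f4 := F4 j; have f3 := F3 j.+1; have f2 := F2 j.
  rewrite ?(dotvDl, dotvDr, dotvNl, dotvNr, dotvZl, dotvZr) in f4 f3.
  have [a0 a1] := threc j.
  have p1 := ler_wpM2l a0 f4.
  have p2 := ler_wpM2l (ltW (th0 j.+1)) f3.
  have a2 : 0 <= theta j ^+ 2 - (theta j.+1 ^+ 2 - theta j.+1) by rewrite subr_ge0.
  have p3 := mulr_ge0 a2 f2.
  move: IH p1 p2 p3 f2.
  move: (h j) (h j.+1) (dotv (z j.+1 - xstar) (z j.+1 - xstar)) => H0 H1 MM.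
  move=> IH p1 p2 p3 f2.
  lra.
case: k k1 => [//|j] _ /=.
have c := claim j; have f1 := F1 j; rewrite /V in c.
rewrite enorm_sq -/R2.
have M0 : 0 <= L / 2 * dotv (z j.+1 - xstar) (z j.+1 - xstar).
  by rewrite mulr_ge0 ?dotv_ge0 // divr_ge0 // ltW.
have t0 : 0 < theta j ^+ 2 by rewrite exprn_gt0.
have p := ler_wpM2r (ltW t0) f1.
move: c M0 p f1; move: (h j) (dotv (z j.+1 - xstar) (z j.+1 - xstar)) => H0 MM c M0 p f1.
rewrite ler_pdivlMr; last by rewrite mulr_gt0.
lra.
Qed.
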